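(* If $\vdash \mathbb{N}\ \checkmark$, then: (1) if $\mathbb{N}$ contains an input or output process, then $\mathbb{N}$ forward reduces to $\mathbb{N}'$ and that input or output prefix does not occur in $\mathbb{N}'$; (2) if $\mathbb{N}$ contains a checkpoint named $A$, then there is a reduction of $\mathbb{N}$ in which the last step is a rollback making the processes checkpointed by $A$ active processes.
   Context: Setting: a calculus of synchronous multiparty sessions with named checkpoints. Processes include (possibly checkpointed by a name $A$) external choices of inputs and internal choices of outputs. A configuration is a pair of a sequence of checkpointed processes and an active process; when a checkpointed process is crossed in a forward reduction it is pushed onto the sequence. A rollback to checkpoint $A$ makes the processes checkpointed by $A$ stored in the participants' sequences become active again (discarding what is above them), allowed only when the participants not involved have active process $\mathbf{0}$ and no process checkpointed by $A$ stored. A network $\mathbb{N}$ is a parallel composition of multiparty sessions, which reduce independently. $\vdash \mathbb{N}\ \checkmark$ means every multiparty session in $\mathbb{N}$ is typable by a global type $\langle\Upsilon,\mathsf{G}\rangle$ (a sequence $\Upsilon$ of checkpointed single-threaded global types with distinct checkpoint names, and an active single-threaded global type $\mathsf{G}$), with all participants of the global type present in the session and each participant's configuration type agreeing (via subtyping) with the projections of the global type. *)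

(* Defs.v *)
From Stdlib Require Import List Arith Relations.
Import ListNotations.

Definition participant := nat.
Definition label := nat.
Definition ckname := nat.

(* Processes:  0 | [A ▷] p?{l_i.P_i}_i | [A ▷] p!{l_i.P_i}_i
   The optional name is the checkpoint (None = not checkpointed). *)
Inductive proc : Type :=
| PNil
| PIn  (c : option ckname) (p : participant) (bs : list (label * proc))
| POut (c : option ckname) (p : participant) (bs : list (label * proc)).

Definition ck_of (P : proc) : option ckname :=
  match P with PNil => None | PIn c _ _ => c | POut c _ _ => c end.

Definition is_comm (P : proc) : Prop :=
  match P with PNil => False | _ => True end.

(* Configuration: sequence of stored checkpointed processes (oldest first,
   top of the stack at the end) and the active process. *)
Definition config := (list proc * proc)%type.
Definition session := list (participant * config).
Definition network := list session.

Inductive stype : Type :=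
| TEnd
| TIn  (c : option ckname) (p : participant) (bs : list (label * stype))
| TOut (c : option ckname) (p : participant) (bs : list (label * stype)).

Inductive has_type : proc -> stype -> Prop :=
| ht_nil : has_type PNil TEnd
| ht_in c p bs ts :
    bs <> [] -> NoDup (map fst bs) ->
    Forall2 (fun b t => fst b = fst t /\ has_type (snd b) (snd t)) bs ts ->
    has_type (PIn c p bs) (TIn c p ts)
| ht_out c p bs ts :
    bs <> [] -> NoDup (map fst bs) ->
    Forall2 (fun b t => fst b = fst t /\ has_type (snd b) (snd t)) bs ts ->
    has_type (POut c p bs) (TOut c p ts).

Inductive subtype : stype -> stype -> Prop :=
| sub_end : subtype TEnd TEnd
| sub_in c p ts us :
    (forall l U, In (l, U) us -> exists T, In (l, T) ts /\ subtype T U) ->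
    subtype (TIn c p ts) (TIn c p us)
| sub_out c p ts us :
    (forall l T, In (l, T) ts -> exists U, In (l, U) us /\ subtype T U) ->
    subtype (TOut c p ts) (TOut c p us).

Inductive global : Type :=
| GEnd
| GComm (c : option ckname) (p q : participant) (bs : list (label * global)).

Definition gck (G : global) : option ckname :=
  match G with GEnd => None | GComm c _ _ _ => c end.

Inductive in_parts : participant -> global -> Prop :=
| ip_snd c p q bs : in_parts p (GComm c p q bs)
| ip_rcv c p q bs : in_parts q (GComm c p q bs)
| ip_br c p q bs r b : In b bs -> in_parts r (snd b) -> in_parts r (GComm c p q bs).

Inductive add_ck : option ckname -> stype -> stype -> Prop :=
| ack_none T : add_ck None T T
| ack_end A : add_ck (Some A) TEnd TEnd
| ack_in A p ts : add_ck (Some A) (TIn None p ts) (TIn (Some A) p ts)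
| ack_out A p ts : add_ck (Some A) (TOut None p ts) (TOut (Some A) p ts).

(* Projection  G ↾ r = T  (partial; plain merge for third parties;
   a checkpoint is seen by every participant of the global type). *)
Inductive proj : participant -> global -> stype -> Prop :=
| pj_end r : proj r GEnd TEnd
| pj_snd c p q bs ts :
    p <> q -> bs <> [] -> NoDup (map fst bs) ->
    Forall2 (fun b t => fst b = fst t /\ proj p (snd b) (snd t)) bs ts ->
    proj p (GComm c p q bs) (TOut c q ts)
| pj_rcv c p q bs ts :
    p <> q -> bs <> [] -> NoDup (map fst bs) ->
    Forall2 (fun b t => fst b = fst t /\ proj q (snd b) (snd t)) bs ts ->
    proj q (GComm c p q bs) (TIn c p ts)
| pj_oth c p q bs r T T' :
    p <> q -> r <> p -> r <> q -> bs <> [] -> NoDup (map fst bs) ->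
    (forall b, In b bs -> proj r (snd b) T) ->
    add_ck c T T' ->
    proj r (GComm c p q bs) T'.

Inductive projU (r : participant) : list global -> list stype -> Prop :=
| pu_nil : projU r [] []
| pu_in g gs T Ts : in_parts r g -> proj r g T -> projU r gs Ts -> projU r (g :: gs) (T :: Ts)
| pu_out g gs Ts : ~ in_parts r g -> projU r gs Ts -> projU r (g :: gs) Ts.

Definition conf_agrees (r : participant) (cf : config) (Ups : list global) (G : global) : Prop :=
  exists Ts T,
    projU r Ups Ts /\ proj r G T /\
    Forall2 (fun Q U => exists T0, has_type Q T0 /\ subtype T0 U) (fst cf) Ts /\
    (exists T0, has_type (snd cf) T0 /\ subtype T0 T).

Definition typable_session (M : session) : Prop :=
  exists (Ups : list global) (G : global),
    Forall (fun g => gck g <> None) Ups /\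
    NoDup (map gck Ups) /\
    NoDup (map fst M) /\
    (forall r, (in_parts r G \/ Exists (in_parts r) Ups) -> In r (map fst M)) /\
    Forall (fun e => conf_agrees (fst e) (snd e) Ups G) M.

Definition net_checked (N : network) : Prop := Forall typable_session N.

Definition push (c : option ckname) (P : proc) (s : list proc) : list proc :=
  match c with None => s | Some _ => s ++ [P] end.

Definition upd (r : participant) (cf : config) (M : session) : session :=
  map (fun e => if Nat.eqb (fst e) r then (r, cf) else e) M.

Inductive sess_fwd : session -> session -> Prop :=
| sf_comm M p q sp sq cp cq bsp bsq l P' Q' :
    p <> q ->
    In (p, (sp, POut cp q bsp)) M ->
    In (q, (sq, PIn cq p bsq)) M ->
    In (l, P') bsp -> In (l, Q') bsq ->
    sess_fwd M (upd q (push cq (PIn cq p bsq) sq, Q')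
                 (upd p (push cp (POut cp q bsp) sp, P') M)).

Definition stores (A : ckname) (s : list proc) : Prop := In (Some A) (map ck_of s).

Inductive rb_conf (A : ckname) : config -> config -> Prop :=
| rb_back s1 Q s2 P :
    ck_of Q = Some A -> ~ stores A s2 ->
    rb_conf A (s1 ++ Q :: s2, P) (s1, Q)
| rb_idle s : ~ stores A s -> rb_conf A (s, PNil) (s, PNil).

Inductive sess_rb (A : ckname) : session -> session -> Prop :=
| srb M M' :
    Forall2 (fun e e' => fst e = fst e' /\ rb_conf A (snd e) (snd e')) M M' ->
    Exists (fun e => stores A (fst (snd e))) M ->
    sess_rb A M M'.

Inductive step_kind := Fwd | Rb (A : ckname).

Definition sess_step (k : step_kind) (M M' : session) : Prop :=
  match k with Fwd => sess_fwd M M' | Rb A => sess_rb A M M' end.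

Inductive net_step (k : step_kind) (i : nat) : network -> network -> Prop :=
| ns N1 M M' N2 :
    length N1 = i -> sess_step k M M' ->
    net_step k i (N1 ++ M :: N2) (N1 ++ M' :: N2).

Definition fwd_red (N N' : network) : Prop := exists i, net_step Fwd i N N'.
Definition red (N N' : network) : Prop := exists k i, net_step k i N N'.
Definition fwd_star := clos_refl_trans network fwd_red.
Definition red_star := clos_refl_trans network red.

(* Main.v *)
Require Import Defs.
From Stdlib Require Import List Arith Lia Relations Classical.
Import ListNotations.

Definition subck (T U : stype) : Prop :=
  match T, U with
  | TEnd, TEnd => True
  | TIn _ p ts, TIn _ p' us => p = p' /\ forall l U, In (l,U) us -> exists T, In (l,T) ts /\ subtype T U
  | TOut _ p ts, TOut _ p' us => p = p' /\ forall l T, In (l,T) ts -> exists U, In (l,U) us /\ subtype T U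
  | _, _ => False
  end.

Lemma subtype_subck T U : subtype T U -> subck T U.
Proof. destruct 1; simpl; auto. Qed.

Lemma add_ck_subck c T T' T0 : add_ck c T T' -> subck T0 T' -> subck T0 T.
Proof. destruct 1; destruct T0; simpl; auto. Qed.

Fixpoint gdepth (g : global) : nat :=
  match g with
  | GEnd => 0
  | GComm _ _ _ bs => S ((fix go (l : list (label * global)) : nat :=
       match l with [] => 0 | b :: l' => let (_, g') := b in max (gdepth g') (go l') end) bs)
  end.

Lemma gdepth_lt c p q bs b : In b bs -> gdepth (snd b) < gdepth (GComm c p q bs).
Proof.
  simpl. induction bs as [|[l g] bs IH]; simpl; [tauto|].
  intros [H|H]; [subst; simpl; lia|]. specialize (IH H). lia.
Qed.

Definition Inv (M : session) (G : global) : Prop :=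
  NoDup (map fst M) /\ (forall r, in_parts r G -> In r (map fst M)) /\
  (forall r s P, In (r,(s,P)) M -> exists T, proj r G T /\ exists T0, has_type P T0 /\ subck T0 T).

Definition pushed (cf : config) : list proc :=
  let (s, P) := cf in match P with PNil => s | _ => push (ck_of P) P s end.

Definition R (e e' : participant * config) : Prop :=
  fst e' = fst e /\ snd (snd e') = PNil /\ exists ext, fst (snd e') = pushed (snd e) ++ ext.

Definition R1 (a b : participant * config) : Prop :=
  fst b = fst a /\ (snd b = snd a \/ (snd (snd a) <> PNil /\
     fst (snd b) = push (ck_of (snd (snd a))) (snd (snd a)) (fst (snd a)))).

Lemma pushed_app cf : exists k, pushed cf = fst cf ++ k.
Proof.
  destruct cf as [s P]; destruct P; simpl; try (exists []; rewrite app_nil_r; reflexivity);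
  destruct c; simpl; eauto; exists []; rewrite app_nil_r; reflexivity.
Qed.

Lemma pushed_nonnil s P : P <> PNil -> pushed (s,P) = push (ck_of P) P s.
Proof. destruct P; simpl; congruence. Qed.

Lemma R1_R a b c : R1 a b -> R b c -> R a c.
Proof.
  intros [H1 H2] [H3 [H4 [ext H5]]]. split; [congruence|]. split; auto.
  destruct H2 as [H2|[H2 H6]].
  - rewrite <- H2; eauto.
  - destruct (pushed_app (snd b)) as [k Hk]. exists (k ++ ext).
    rewrite H5, Hk, H6, app_assoc. destruct a as [r [s P]]; cbn [fst snd] in *.
    rewrite pushed_nonnil; auto.
Qed.

Lemma F2_comp (M M1 M' : session) : Forall2 R1 M M1 -> Forall2 R M1 M' -> Forall2 R M M'.
Proof.
  intros H; revert M'; induction H; intros M' H'; inversion H'; subst; constructor; eauto using R1_R.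
Qed.

Lemma F2_map {A B} (Rl : A -> B -> Prop) f l : (forall x, In x l -> Rl x (f x)) -> Forall2 Rl l (map f l).
Proof. induction l; simpl; constructor; auto. Qed.

Lemma F2_refl {A} (Rl : A -> A -> Prop) l : (forall x, In x l -> Rl x x) -> Forall2 Rl l l.
Proof. induction l; simpl; constructor; auto. Qed.

Lemma F2_in_l {A B} (Rl : A -> B -> Prop) l1 l2 x : Forall2 Rl l1 l2 -> In x l1 -> exists y, In y l2 /\ Rl x y.
Proof. induction 1; simpl; [tauto|]. intros [->|H1]; [eauto|]. destruct (IHForall2 H1) as [z [? ?]]; eauto. Qed.

Lemma F2_in_r {A B} (Rl : A -> B -> Prop) l1 l2 w : Forall2 Rl l1 l2 -> In w l2 -> exists v, In v l1 /\ Rl v w.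
Proof. induction 1; simpl; [tauto|]. intros [->|H1]; [eauto|]. destruct (IHForall2 H1) as [z [? ?]]; eauto. Qed.

Lemma in_upd x cf M e : In e (upd x cf M) -> e = (x,cf) \/ (fst e <> x /\ In e M).
Proof.
  unfold upd; rewrite in_map_iff; intros [e0 [He Hin]].
  destruct (Nat.eqb (fst e0) x) eqn:E; [left; auto|right; subst; split; auto].
  apply Nat.eqb_neq; auto.
Qed.

Lemma upd_in_same x cf cf0 M : In (x,cf0) M -> In (x,cf) (upd x cf M).
Proof. intros H; apply in_map_iff; exists (x,cf0); simpl; rewrite Nat.eqb_refl; auto. Qed.

Lemma upd_in_other x cf M e : In e M -> fst e <> x -> In e (upd x cf M).
Proof. intros H H'; apply in_map_iff; exists e; apply Nat.eqb_neq in H'; destruct e as [a b]; simpl in *; rewrite H'; auto. Qed.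

Lemma upd_fst x cf M : map fst (upd x cf M) = map fst M.
Proof.
  unfold upd; rewrite map_map; apply map_ext; intros [a b]; simpl.
  destruct (Nat.eqb a x) eqn:E; simpl; auto. symmetry; apply Nat.eqb_eq; auto.
Qed.

Lemma uniq (M : session) r a b : NoDup (map fst M) -> In (r,a) M -> In (r,b) M -> a = b.
Proof.
  induction M as [|e M IH]; simpl; intros Hnd Ha Hb; [contradiction|].
  inversion Hnd; subst.
  destruct Ha as [Ha|Ha], Hb as [Hb|Hb]; subst.
  - inversion Hb; auto.
  - apply (in_map fst) in Hb; simpl in *; contradiction.
  - apply (in_map fst) in Ha; simpl in *; contradiction.
  - eauto.
Qed.

Lemma in_fst (M : session) r : In r (map fst M) -> exists s P, In (r,(s,P)) M.
Proof. rewrite in_map_iff; intros [[r' [s P]] [H1 H2]]; simpl in *; subst; eauto. Qed.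

Definition fstar := clos_refl_trans session sess_fwd.

Lemma complete : forall n G M, gdepth G < n -> Inv M G ->
  exists M', fstar M M' /\ Forall2 R M M'.
Proof.
  induction n as [|n IH]; intros G M Hd HI; [lia|].
  destruct G as [|c p0 q0 bs].
  - exists M; split; [apply rt_refl|]. apply F2_refl. intros [r [s P]] Hin.
    destruct HI as [_ [_ H]]. destruct (H _ _ _ Hin) as [T [HT [T0 [Ht Hs]]]].
    inversion HT; subst. destruct T0; simpl in Hs; try contradiction.
    inversion Ht; subst. split; auto. split; auto. exists []; simpl; rewrite app_nil_r; auto.
  - destruct HI as [Hnd [Hpart Hty]].
    assert (Hp0: In p0 (map fst M)) by (apply Hpart; constructor).
    assert (Hq0: In q0 (map fst M)) by (apply Hpart; constructor).
    apply in_fst in Hp0 as [sp [P0 Hp0]]. apply in_fst in Hq0 as [sq [Q0 Hq0]].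
    destruct (Hty _ _ _ Hp0) as [Tp [HTp [T0p [Htp Hsp]]]].
    destruct (Hty _ _ _ Hq0) as [Tq [HTq [T0q [Htq Hsq]]]].
    inversion HTp; subst; try (exfalso; congruence).
    inversion HTq; subst; try (exfalso; congruence).
    rename H2 into Hneq, H7 into Hf2p, H11 into Hf2q.
    destruct T0p as [|c0 q' tsx|c0 q' ts0p]; simpl in Hsp; try contradiction.
    destruct Hsp as [-> Hsp].
    destruct T0q as [|c1 p' tq0|c1 p' tsx]; simpl in Hsq; try contradiction.
    destruct Hsq as [-> Hsq].
    inversion Htp as [| |c0' q'' bsp ts0p' Hbsp _ Hf2bp]; subst.
    inversion Htq as [|c1' p'' bsq tq0' Hbsq _ Hf2bq|]; subst.
    destruct bsp as [|x bsp']; [congruence|].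
    destruct (F2_in_l _ _ _ x Hf2bp (or_introl eq_refl)) as [t [Ht [Hxt Htyx]]].
    destruct (Hsp (fst t) (snd t)) as [U [HU HsU]]; [rewrite <- surjective_pairing; auto|].
    destruct (F2_in_r _ _ _ _ Hf2p HU) as [b [Hb [Hbl HpU]]]. simpl in Hbl, HpU.
    destruct (F2_in_l _ _ _ b Hf2q Hb) as [u [Hu [Hbu Hqu]]].
    destruct (Hsq (fst u) (snd u)) as [T [HT HsT]]; [rewrite <- surjective_pairing; auto|].
    destruct (F2_in_r _ _ _ _ Hf2bq HT) as [y [Hy [Hyl HtyY]]]. simpl in Hyl, HtyY.
    set (M1 := upd q0 (push c1 (PIn c1 p0 bsq) sq, snd y)
                 (upd p0 (push c0 (POut c0 q0 (x :: bsp')) sp, snd x) M)).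
    assert (Hstep : sess_fwd M M1).
    { unfold M1. apply (sf_comm M p0 q0 sp sq c0 c1 (x :: bsp') bsq (fst x) (snd x) (snd y)); auto.
      - rewrite <- surjective_pairing; simpl; auto.
      - replace (fst x) with (fst y) by congruence. rewrite <- surjective_pairing; auto. }
    assert (HI1 : Inv M1 (snd b)).
    { split; [unfold M1; rewrite !upd_fst; auto|]. split.
      - intros r Hr. unfold M1; rewrite !upd_fst. apply Hpart. eapply ip_br; eauto.
      - intros r s P Hin. unfold M1 in Hin. apply in_upd in Hin as [Heq|[Hr Hin]].
        + inversion Heq; subst. exists (snd u); split; auto. exists T; split; auto. apply subtype_subck; auto.
        + apply in_upd in Hin as [Heq|[Hr' Hin]].
          * inversion Heq; subst. exists U; split; auto. exists (snd t); split; auto. apply subtype_subck; auto.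
          * simpl in Hr, Hr'. destruct (Hty _ _ _ Hin) as [T' [HT' [T0 [HtyP Hs0]]]].
            inversion HT'; subst; try congruence.
            exists T1; split; [auto|]. exists T0; split; auto. eapply add_ck_subck; eauto. }
    destruct (IH (snd b) M1) as [M' [Hstar HF]]; [pose proof (gdepth_lt c p0 q0 bs b Hb); lia|exact HI1|].
    exists M'; split; [eapply rt_trans; [apply rt_step; exact Hstep|exact Hstar]|].
    eapply F2_comp; [|exact HF]. unfold M1, upd. rewrite map_map. apply F2_map.
    intros [r [s P]] Hin. simpl.
    destruct (Nat.eqb r p0) eqn:E1.
    + apply Nat.eqb_eq in E1; subst r. pose proof (uniq M p0 _ _ Hnd Hin Hp0) as E. inversion E; subst.
      assert (E2 : Nat.eqb p0 q0 = false) by (apply Nat.eqb_neq; auto). cbn [fst]; rewrite E2.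
      split; auto. right; simpl; split; [discriminate|reflexivity].
    + destruct (Nat.eqb r q0) eqn:E2.
      * apply Nat.eqb_eq in E2; subst r. pose proof (uniq M q0 _ _ Hnd Hin Hq0) as E. inversion E; subst.
        cbn [fst]; rewrite Nat.eqb_refl. split; auto. right; simpl; split; [discriminate|reflexivity].
      * simpl; rewrite ?E1, ?E2; split; auto.
Qed.

Lemma Inv_of_checked N i M : net_checked N -> nth_error N i = Some M -> exists G, Inv M G.
Proof.
  intros HN Hn. apply nth_error_In in Hn. unfold net_checked in HN.
  rewrite Forall_forall in HN. destruct (HN _ Hn) as [Ups [G [_ [_ [Hnd [Hp HF]]]]]].
  exists G. split; auto. split; [intros r Hr; apply Hp; auto|].
  intros r s P Hin. rewrite Forall_forall in HF. destruct (HF _ Hin) as [Ts [T [_ [HT [_ [T0 [H1 H2]]]]]]].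
  exists T; split; auto. exists T0; split; auto. apply subtype_subck; auto.
Qed.

Lemma lift L1 L2 M M' : fstar M M' -> fwd_star (L1 ++ M :: L2) (L1 ++ M' :: L2).
Proof.
  induction 1.
  - apply rt_step. exists (length L1). constructor; auto.
  - apply rt_refl.
  - eapply rt_trans; eauto.
Qed.

Lemma nth_mid {A} (L1 L2 : list A) a : nth_error (L1 ++ a :: L2) (length L1) = Some a.
Proof. rewrite nth_error_app2; [rewrite Nat.sub_diag; reflexivity|lia]. Qed.

Lemma fwd_red_star N N' : fwd_star N N' -> red_star N N'.
Proof.
  induction 1.
  - apply rt_step. destruct H as [i H]. exists Fwd, i; auto.
  - apply rt_refl.
  - eapply rt_trans; eauto.
Qed.

Lemma stores_split A s : stores A s -> exists s1 Q s2, s = s1 ++ Q :: s2 /\ ck_of Q = Some A /\ ~ stores A s2.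
Proof.
  induction s as [|x s IH]; unfold stores in *; simpl; [tauto|]. intros H. fold (stores A s) in *.
  destruct (classic (stores A s)) as [Hs|Hs].
  - destruct (IH Hs) as [s1 [Q [s2 [-> [H1 H2]]]]]. exists (x :: s1), Q, s2; auto.
  - destruct H as [H|H]; [|contradiction]. exists [], x, s; auto.
Qed.

Lemma build_rb A (M : session) : (forall e, In e M -> snd (snd e) = PNil) ->
  exists M'', Forall2 (fun e e' => fst e = fst e' /\ rb_conf A (snd e) (snd e')) M M''.
Proof.
  induction M as [|[r [s P]] M IH]; intros H.
  - exists []; constructor.
  - destruct IH as [M'' HM]; [intros e He; apply H; simpl; auto|].
    assert (HP : P = PNil) by (apply (H (r,(s,P))); simpl; auto). subst P.
    destruct (classic (stores A s)) as [Hs|Hs].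
    + destruct (stores_split A s Hs) as [s1 [Q [s2 [-> [H1 H2]]]]].
      exists ((r, (s1, Q)) :: M''). constructor; auto. split; auto. constructor; auto.
    + exists ((r, (s, PNil)) :: M''). constructor; auto. split; auto. constructor; auto.
Qed.

Lemma stores_app A s k : stores A s -> stores A (s ++ k).
Proof. unfold stores; rewrite map_app; intros H; apply in_or_app; auto. Qed.

Theorem theorem3 (N : network) :
  net_checked N ->
  (forall (i : nat) (M : session) (p : participant) (s : list proc) (P : proc),
      nth_error N i = Some M -> In (p, (s, P)) M -> is_comm P ->
      exists N' M' s' P',
        fwd_star N N' /\ nth_error N' i = Some M' /\
        In (p, (s', P')) M' /\ P' <> P)
  /\
  (forall (i : nat) (M : session) (p : participant) (s : list proc) (P : proc) (A : ckname),
      nth_error N i = Some M -> In (p, (s, P)) M ->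
      (stores A s \/ ck_of P = Some A) ->
      exists N1 N2 M2 s2 P2,
        red_star N N1 /\ net_step (Rb A) i N1 N2 /\
        nth_error N2 i = Some M2 /\ In (p, (s2, P2)) M2 /\ ck_of P2 = Some A).
Proof.
  intros HN.
  assert (key : forall i M, nth_error N i = Some M -> exists L1 L2 M',
     N = L1 ++ M :: L2 /\ length L1 = i /\ fwd_star N (L1 ++ M' :: L2) /\ Forall2 R M M').
  { intros i M Hn. destruct (Inv_of_checked N i M HN Hn) as [G HI].
    destruct (complete (S (gdepth G)) G M (Nat.lt_succ_diag_r _) HI) as [M' [Hs HF]].
    destruct (nth_error_split N i Hn) as [L1 [L2 [-> Hl]]].
    exists L1, L2, M'; repeat split; auto. apply lift; auto. }
  split.
  - intros i M p s P Hn Hin Hc. destruct (key i M Hn) as [L1 [L2 [M' [HNe [Hl [Hst HF]]]]]].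
    destruct (F2_in_l _ _ _ _ HF Hin) as [[r [s' P']] [Hin' [Hr [HP _]]]]. simpl in Hr, HP; subst.
    exists (L1 ++ M' :: L2), M', s', PNil. split; auto. split; [try subst i; apply nth_mid|]. split; auto.
    destruct P; simpl in Hc; try contradiction; discriminate.
  - intros i M p s P A Hn Hin Hst0. destruct (key i M Hn) as [L1 [L2 [M' [HNe [Hl [Hst HF]]]]]].
    destruct (F2_in_l _ _ _ _ HF Hin) as [[r [s' P']] [Hin' [Hr [HP [ext Hext]]]]]. simpl in Hr, HP; cbn [fst snd] in Hext; subst r P'.
    assert (Hsto : stores A s').
    { rewrite Hext. apply stores_app. destruct Hst0 as [H|H].
      - destruct (pushed_app (s,P)) as [k Hk]. rewrite Hk. apply stores_app; auto.
      - destruct P; simpl in H; try discriminate; subst; simpl; unfold stores; rewrite map_app;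
        apply in_or_app; right; simpl; auto. }
    destruct (build_rb A M') as [M'' HM''].
    { intros e He. destruct (F2_in_r _ _ _ _ HF He) as [e0 [_ [_ [H _]]]]; auto. }
    destruct (F2_in_l _ _ _ _ HM'' Hin') as [[r2 [s2 P2]] [Hin2 [Hr2 Hrb]]]. simpl in Hr2, Hrb; subst r2.
    inversion Hrb; subst; [|contradiction].
    exists (L1 ++ M' :: L2), (L1 ++ M'' :: L2), M'', s2, P2.
    split; [apply fwd_red_star; auto|]. split.
    + constructor; auto. constructor; auto. apply Exists_exists. eexists; split; [exact Hin'|simpl; auto].
    + split; [try subst i; apply nth_mid|]. auto.
Qed.
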